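(* Let $k\ge0$ be an integer and $t\ge1$ an odd integer. Let $\varphi$ be the endomorphism of $E$ given on generators by $\varphi(e_n)=e_n$ for $1\le n\le k$, $\varphi(e_n)=-e_n$ for $k+1\le n\le k+t$, and $\varphi(e_n)=-e_n+2e_1\cdots e_ke_{k+1}\cdots e_{k+t}e_n$ for $n>k+t$ (this $\varphi$ is an automorphism with $\varphi^2=\mathrm{id}$). Then $E_\varphi$ and $E_k$ are isomorphic as $\mathbb{Z}_2$-graded algebras.
   Context: $F$ is a field of characteristic zero, $L$ an infinite-dimensional $F$-vector space with basis $e_1,e_2,\ldots$, $E$ its Grassmann algebra. $E_\varphi$ is the $\mathbb{Z}_2$-grading on $E$ by the eigenspaces of $\varphi$ for $1$ (degree 0) and $-1$ (degree 1). $E_k$ is the $\mathbb{Z}_2$-grading in which $e_1,\ldots,e_k$ have degree $0$ and all other $e_i$ have degree $1$. *)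

(* Defs.v *)
From HB Require Import structures.
From mathcomp Require Import all_boot all_order all_algebra.
Set Implicit Arguments. Unset Strict Implicit. Unset Printing Implicit Defensive.
Import Order.TTheory GRing.Theory.
Local Open Scope ring_scope.

(* Generators are indexed from 0: the paper's e_n (n >= 1) is  g (n - 1). *)

Section Grassmann.
Variables (F : fieldType) (A : algType F) (g : nat -> A).

Definition gmono (s : seq nat) : A := \prod_(i <- s) g i.

Definition in_mono_span (P : seq nat -> bool) (x : A) : Prop :=
  exists (ms : seq (seq nat)) (cs : seq F),
    all (sorted ltn) ms /\ all P ms /\
    x = \sum_(i < size ms) cs`_i *: gmono (nth [::] ms i).

Definition is_grassmann : Prop :=
  [/\ forall i j, g i * g j = - (g j * g i),
      forall x, in_mono_span predT x &
      forall (ms : seq (seq nat)) (cs : seq F),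
        uniq ms -> all (sorted ltn) ms -> size cs = size ms ->
        \sum_(i < size ms) cs`_i *: gmono (nth [::] ms i) = 0 -> all (eq_op^~ 0) cs].

Definition alg_endo (f : A -> A) : Prop :=
  [/\ forall (a : F) (x y : A), f (a *: x + y) = a *: f x + f y,
      forall x y, f (x * y) = f x * f y & f 1 = 1].

(* grading E_k: g 0, ..., g (k-1) (i.e. e_1..e_k) have degree 0, others degree 1;
   homogeneous of degree b = span of monomials with parity of the number of
   factors of index >= k equal to b *)
Definition Ek_homog (k : nat) (b : bool) (x : A) : Prop :=
  in_mono_span (fun s => odd (count (fun i => k <= i)%N s) == b) x.

Definition Ephi_homog (phi : A -> A) (b : bool) (x : A) : Prop :=
  phi x = (if b then - x else x).

Definition graded_iso (gr1 gr2 : bool -> A -> Prop) (psi : A -> A) : Prop :=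
  [/\ alg_endo psi, bijective psi &
      forall b x, gr1 b x -> gr2 b (psi x)].

End Grassmann.

(* Main.v *)
Require Import Defs.
From HB Require Import structures.
From mathcomp Require Import all_boot all_order all_algebra.
From mathcomp Require Import ring.
Set Implicit Arguments. Unset Strict Implicit. Unset Printing Implicit Defensive.
Import GRing.Theory.
Local Open Scope ring_scope.

Fixpoint ins (i : nat) (u : seq nat) : int * seq nat :=
  match u with
  | [::] => (1, [:: i])
  | j :: u' => if (i < j)%N then (1, i :: u) else if i == j then (0, [::])
               else let p := ins i u' in (- p.1, j :: p.2)
  end.

Lemma ins_sub i u : {subset (ins i u).2 <= i :: u}.
Proof.
elim: u => [|j u IH] /= x; first by [].
case: ltnP => // _; case: eqP => // _ /=.
rewrite !inE => /orP [-> | /IH]; first by rewrite orbT.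
by rewrite inE => /orP [->|->]; rewrite ?orbT.
Qed.

Lemma ins_sorted i u : sorted ltn u -> sorted ltn (ins i u).2.
Proof.
elim: u => [|j u IH] //= Hs.
case: ltnP => [ij|ji]; first by rewrite /= ij.
case: eqP => [//|nij] /=.
have ji' : (j < i)%N by rewrite ltn_neqAle ji andbT eq_sym; apply/eqP.
rewrite (path_sortedE ltn_trans); apply/andP; split; last first.
  by apply: IH; apply: (path_sorted Hs).
move: Hs; rewrite (path_sortedE ltn_trans) => /andP [Hall _].
apply/allP => x /ins_sub; rewrite inE => /orP [/eqP -> //| xu].
exact: (allP Hall).
Qed.

Lemma ins_prod (R : pzRingType) (y : nat -> R) :
  (forall i j, y i * y j = - (y j * y i)) -> (forall i, y i * y i = 0) ->
  forall i u, y i * \prod_(j <- u) y j = (\prod_(j <- (ins i u).2) y j) *~ (ins i u).1.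
Proof.
move=> Hac Hyy i; elim => [|j u IH] /=.
  by rewrite big_nil big_seq1 mulr1.
case: ltnP => _; first by rewrite !big_cons.
case: eqP => [->|_] /=.
  by rewrite big_cons mulrA Hyy mul0r mulr0z.
by rewrite !big_cons mulrA Hac mulNr -mulrA IH mulrNz mulrzAr.
Qed.

Definition ev (F : fieldType) (M : lmodType F) (X : seq nat -> M) (r : seq (F * seq nat)) : M :=
  \sum_(p <- r) p.1 *: X p.2.

Lemma lin_sum (F : fieldType) (M N : lmodType F) (f : M -> N) (I : Type) (r : seq I) (a : I -> F) (h : I -> M) :
  (forall (a : F) x y, f (a *: x + y) = a *: f x + f y) ->
  f (\sum_(p <- r) a p *: h p) = \sum_(p <- r) a p *: f (h p).
Proof.
move=> Hf.
have f0 : f 0 = 0.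
  have H := Hf 1 0 0; rewrite scaler0 addr0 scale1r in H.
  by apply: (addrI (f 0)); rewrite addr0 -H.
elim: r => [|p r IH]; first by rewrite !big_nil.
by rewrite !big_cons Hf IH.
Qed.

Lemma ev_part (F : fieldType) (M : lmodType F) (X : seq nat -> M) r :
  ev X r = \sum_(s <- undup (map snd r)) (\sum_(p <- r | p.2 == s) p.1) *: X s.
Proof.
rewrite /ev.
under [RHS]eq_bigr => s _ do rewrite scaler_suml big_mkcond /=.
rewrite exchange_big /= big_seq [RHS]big_seq; apply: eq_bigr => p pr.
rewrite (bigD1_seq p.2) ?undup_uniq ?mem_undup ?map_f //= eqxx big1 ?addr0 //.
by move=> s; rewrite eq_sym => /negbTE ->.
Qed.

Lemma ev_idx (F : fieldType) (M : lmodType F) (X : seq nat -> M) r :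
  \sum_(i < size (map snd r)) (map fst r)`_i *: X (nth [::] (map snd r) i) = ev X r.
Proof.
rewrite /ev (big_nth (0, [::])) big_mkord size_map; apply: eq_bigr => i _.
by rewrite (nth_map (0, [::])) // (nth_map (0, [::])).
Qed.

Lemma idx_ev (F : fieldType) (M : lmodType F) (X : seq nat -> M) ms (cs : seq F) :
  \sum_(i < size ms) cs`_i *: X (nth [::] ms i) =
  ev X [seq (cs`_i, nth [::] ms i) | i <- iota 0 (size ms)].
Proof.
rewrite /ev big_map.
have -> : iota 0 (size ms) = index_iota 0 (size ms) by rewrite /index_iota subn0.
by rewrite big_mkord.
Qed.

Lemma idx_keys (T : Type) (ms : seq (seq nat)) (cs : seq T) (x0 : T) :
  map snd [seq (nth x0 cs i, nth [::] ms i) | i <- iota 0 (size ms)] = ms.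
Proof. by rewrite -map_comp; exact: (mkseq_nth [::] ms). Qed.
Section G.
Variables (F : fieldType) (A : algType F) (g : nat -> A).
Hypothesis Hac : forall i j, g i * g j = - (g j * g i).
Hypothesis Hspan : forall x, in_mono_span g predT x.
Hypothesis Hind : forall (ms : seq (seq nat)) (cs : seq F),
        uniq ms -> all (sorted ltn) ms -> size cs = size ms ->
        \sum_(i < size ms) cs`_i *: gmono g (nth [::] ms i) = 0 -> all (eq_op^~ 0) cs.
Hypothesis H2 : (2%:R : F) != 0.

Local Notation gm := (gmono g).

Lemma gg0 i : g i * g i = 0.
Proof.
have H : (2%:R : F) *: (g i * g i) = 0 by rewrite scaler_nat mulr2n {1}Hac addNr.
by rewrite -[g i * g i](scale1r) -(mulVf H2) -scalerA H scaler0.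
Qed.

Definition srt (r : seq (F * seq nat)) := all (sorted ltn) (map snd r).

Lemma span_ev x : exists r, srt r && (x == ev gm r).
Proof.
have [ms [cs [Hs [_ ->]]]] := Hspan x.
exists [seq (cs`_i, nth [::] ms i) | i <- iota 0 (size ms)].
by rewrite /srt idx_keys Hs idx_ev eqxx.
Qed.

Lemma ev0 (M : lmodType F) (X : seq nat -> M) r :
  srt r -> ev gm r = 0 -> ev X r = 0.
Proof.
move=> Hs H0.
set L := undup (map snd r).
set c := fun s => \sum_(p <- r | p.2 == s) p.1.
set r' := [seq (c s, s) | s <- L].
have k1 : map snd r' = L by rewrite /r'; elim: (L) => //= s L' ->.
have k2 : map fst r' = map c L by rewrite /r'; elim: (L) => //= s L' ->.
have Hsum : \sum_(i < size L) (map c L)`_i *: gm (nth [::] L i) = 0.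
  have Ei := ev_idx gm r'; rewrite k1 k2 in Ei; rewrite Ei.
  by rewrite /ev /r' big_map -[X in _ = X]H0 ev_part.
have Hsrt : all (sorted ltn) L.
  by apply/allP => s; rewrite mem_undup => /(allP Hs).
have := Hind (undup_uniq _) Hsrt (size_map _ _) Hsum.
move=> /allP Hz.
rewrite ev_part big_seq big1 // => s Hs'.
by have /eqP := Hz (c s) (map_f _ Hs'); rewrite /c => ->; rewrite scale0r.
Qed.

Lemma ev_lin (M : lmodType F) (X : seq nat -> M) a r1 r2 :
  ev X ([seq (a * p.1, p.2) | p <- r1] ++ r2) = a *: ev X r1 + ev X r2.
Proof.
rewrite /ev big_cat big_map scaler_sumr; congr (_ + _).
by apply: eq_bigr => p _; rewrite scalerA.
Qed.

Lemma srt_lin a r1 r2 : srt r1 -> srt r2 -> srt ([seq (a * p.1, p.2) | p <- r1] ++ r2).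
Proof.
by rewrite /srt map_cat all_cat -map_comp => -> ->.
Qed.

Lemma ev_eq (M : lmodType F) (X : seq nat -> M) r1 r2 :
  srt r1 -> srt r2 -> ev gm r1 = ev gm r2 -> ev X r1 = ev X r2.
Proof.
move=> s1 s2 He.
have := @ev0 M X ([seq ((-1) * p.1, p.2) | p <- r2] ++ r1) (srt_lin _ s2 s1).
rewrite !ev_lin He scaleN1r addNr => /(_ erefl) /eqP.
by rewrite scaleN1r addrC subr_eq0 => /eqP.
Qed.

Definition alg_ok (f : A -> A) :=
  [/\ forall (a : F) (x y : A), f (a *: x + y) = a *: f x + f y,
      forall x y, f (x * y) = f x * f y & f 1 = 1].

Section Univ.
Variable y : nat -> A.
Hypothesis Hyac : forall i j, y i * y j = - (y j * y i).
Hypothesis Hyy : forall i, y i * y i = 0.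

Local Notation Y := (fun s => \prod_(i <- s) y i).

Definition U x := ev Y (xchoose (span_ev x)).

Lemma U_ev r : srt r -> U (ev gm r) = ev Y r.
Proof.
move=> Hr; rewrite /U.
have /andP [H1 /eqP H2'] := xchooseP (span_ev (ev gm r)).
by apply: ev_eq => //; rewrite -H2'.
Qed.

Lemma U_lin a x z : U (a *: x + z) = a *: U x + U z.
Proof.
have /andP [s1 /eqP ->] := xchooseP (span_ev x).
have /andP [s2 /eqP ->] := xchooseP (span_ev z).
by rewrite -ev_lin U_ev ?srt_lin // (U_ev s1) (U_ev s2) ev_lin.
Qed.

Lemma U_gl i w : U (g i * w) = y i * U w.
Proof.
have /andP [s1 /eqP ->] := xchooseP (span_ev w).
set r := xchoose _.
set r' := [seq (((ins i p.2).1)%:~R * p.1, (ins i p.2).2) | p <- r].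
have sr' : srt r'.
  rewrite /srt /r' -map_comp; apply/allP => s /mapP [p pr ->] /=.
  apply: ins_sorted; exact: (allP s1) _ (map_f _ pr).
have Eg : g i * ev gm r = ev gm r'.
  rewrite /ev mulr_sumr big_map; apply: eq_bigr => p _.
  by rewrite /= -scalerAr /gmono (ins_prod Hac gg0) -scaler_int scalerA [p.1 * _]mulrC.
rewrite Eg !U_ev // /ev mulr_sumr big_map; apply: eq_bigr => p _.
by rewrite /= -scalerAr (ins_prod Hyac Hyy) -scaler_int scalerA [p.1 * _]mulrC.
Qed.

Lemma U_sum (I : Type) (r : seq I) (a : I -> F) (h : I -> A) :
  U (\sum_(p <- r) a p *: h p) = \sum_(p <- r) a p *: U (h p).
Proof. by apply: lin_sum => ? ? ?; apply: U_lin. Qed.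

Lemma U_gml s w : U (gm s * w) = Y s * U w.
Proof.
elim: s w => [|i s IH] w; first by rewrite /gmono !big_nil !mul1r.
by rewrite /gmono !big_cons -!mulrA U_gl IH.
Qed.

Lemma U_alg : alg_ok U /\ forall n, U (g n) = y n.
Proof.
split; [split|].
- exact: U_lin.
- move=> x z.
  have /andP [s1 /eqP ->] := xchooseP (span_ev x).
  rewrite (U_ev s1) /ev.
  have -> : (\sum_(p <- xchoose (span_ev x)) p.1 *: gm p.2) * z =
      \sum_(p <- xchoose (span_ev x)) p.1 *: (gm p.2 * z).
    by rewrite mulr_suml; apply: eq_bigr => p _; rewrite scalerAl.
  rewrite U_sum mulr_suml; apply: eq_bigr => p _.
  by rewrite U_gml scalerAl.
- have E1 : (1 : A) = ev gm [:: (1, [::])] by rewrite /ev big_seq1 scale1r /gmono big_nil.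
  by rewrite {1}E1 U_ev // /ev big_seq1 scale1r big_nil.
- move=> n.
  have -> : g n = ev gm [:: (1, [:: n])] by rewrite /ev big_seq1 scale1r /gmono big_seq1.
  by rewrite U_ev // /ev big_seq1 scale1r big_seq1.
Qed.

End Univ.

Lemma univ (y : nat -> A) :
  (forall i j, y i * y j = - (y j * y i)) -> (forall i, y i * y i = 0) ->
  exists f, alg_ok f /\ forall n, f (g n) = y n.
Proof. move=> H1 H3; exists (U y); exact: U_alg. Qed.


Section AlgFacts.
Variable f : A -> A.
Hypothesis Hf : alg_ok f.

Lemma f0 : f 0 = 0.
Proof.
case: Hf => Hl _ _; have H := Hl 1 0 0; rewrite scaler0 addr0 scale1r in H.
by apply: (addrI (f 0)); rewrite addr0 -H.
Qed.
Lemma fD x z : f (x + z) = f x + f z.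
Proof. by case: Hf => Hl _ _; rewrite -[x]scale1r Hl !scale1r. Qed.
Lemma fZ a x : f (a *: x) = a *: f x.
Proof. by case: Hf => Hl _ _; rewrite -[a *: x]addr0 Hl f0 addr0. Qed.
Lemma fN x : f (- x) = - f x.
Proof. by rewrite -scaleN1r fZ scaleN1r. Qed.
Lemma fM x z : f (x * z) = f x * f z.
Proof. by case: Hf. Qed.
Lemma f1 : f 1 = 1.
Proof. by case: Hf. Qed.
Lemma fprod (I : Type) (r : seq I) (h : I -> A) :
  f (\prod_(i <- r) h i) = \prod_(i <- r) f (h i).
Proof. exact: (big_morph f fM f1). Qed.
Lemma fprodo n (h : 'I_n -> A) :
  f (\prod_(i < n) h i) = \prod_(i < n) f (h i).
Proof. exact: (big_morph f fM f1). Qed.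
Lemma f_ev r : f (ev gm r) = \sum_(p <- r) p.1 *: f (gm p.2).
Proof. by apply: lin_sum; case: Hf. Qed.
End AlgFacts.

Lemma alg_eq f1 f2 : alg_ok f1 -> alg_ok f2 -> (forall n, f1 (g n) = f2 (g n)) ->
  forall x, f1 x = f2 x.
Proof.
move=> H1 H3 Hg x.
have /andP [_ /eqP ->] := xchooseP (span_ev x).
rewrite !f_ev //; apply: eq_bigr => p _.
by rewrite /gmono (fprod H1) (fprod H3); under eq_bigr => i _ do rewrite Hg.
Qed.

Lemma alg_comp h1 h2 : alg_ok h1 -> alg_ok h2 -> alg_ok (h1 \o h2).
Proof.
move=> H1 H3; split => [a x z|x z|] /=.
- by case: H3 => -> _ _; case: H1 => -> _ _.
- by rewrite !fM.
- by rewrite !f1.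
Qed.

Lemma alg_id : alg_ok id.
Proof. by []. Qed.

Lemma comm_gm n s : g n * gm s = ((-1) ^+ size s : F) *: (gm s * g n).
Proof.
elim: s => [|h s IH]; first by rewrite /gmono big_nil mulr1 mul1r expr0 scale1r.
rewrite /gmono in IH *.
rewrite !big_cons mulrA Hac mulNr -[g h * g n * _]mulrA IH -scalerAr /= exprS mulN1r scaleNr.
by rewrite !mulrA.
Qed.

Lemma gm_in0 j s : j \in s -> g j * gm s = 0.
Proof.
elim: s => [|h s IH] //; rewrite inE /gmono big_cons => /orP [/eqP -> | js].
  by rewrite mulrA gg0 mul0r.
by rewrite mulrA Hac mulNr -mulrA IH // mulr0 oppr0.
Qed.

Lemma gm_in0r j s : j \in s -> gm s * g j = 0.
Proof.
move=> js; have H : ((-1) ^+ size s : F) != 0 by rewrite signr_eq0.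
by apply: (scalerI H); rewrite scaler0 -comm_gm gm_in0.
Qed.

Lemma sc_mul (a b : F) (x z : A) : (a *: x) * (b *: z) = (a * b) *: (x * z).
Proof. by rewrite -scalerAl -scalerAr scalerA. Qed.

Variables (k t : nat).
Hypothesis t0 : (0 < t)%N.
Hypothesis todd : odd t.

Definition wk := \prod_(j < k + t) g j.
Local Notation w := wk.

Lemma w_gm : w = gm (iota 0 (k + t)).
Proof. by rewrite /wk /gmono -(big_mkord xpredT) /index_iota subn0. Qed.

Lemma wg0 j : (j < k + t)%N -> w * g j = 0.
Proof. by move=> jk; rewrite w_gm gm_in0r // mem_iota. Qed.
Lemma gw0 j : (j < k + t)%N -> g j * w = 0.
Proof. by move=> jk; rewrite w_gm gm_in0 // mem_iota. Qed.

Lemma ww : w * w = 0.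
Proof.
have kt : (0 < k + t)%N by rewrite addn_gt0 t0 orbT.
have E0 : w = g 0 * gm (iota 1 (k + t).-1).
  by rewrite w_gm -{1}(prednK kt) /= /gmono big_cons.
by rewrite {2}E0 mulrA wg0 ?mul0r.
Qed.

Lemma gw n : g n * w = ((-1) ^+ (k + t) : F) *: (w * g n).
Proof. by rewrite w_gm comm_gm size_iota. Qed.

Definition yfam (a : F) n := (1 + a *: w) * g n.

Lemma g_1aw a i : g i * (1 + a *: w) = (1 + (a * (-1) ^+ (k + t)) *: w) * g i.
Proof.
by rewrite mulrDr mulr1 -scalerAr gw scalerA mulrDl mul1r -scalerAl.
Qed.

Lemma yfam_mul a i j :
  yfam a i * yfam a j = ((1 + a *: w) * (1 + (a * (-1) ^+ (k + t)) *: w)) * (g i * g j).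
Proof.
rewrite /yfam -!mulrA; congr (_ * _).
by rewrite [g i * (_ * _)]mulrA g_1aw -!mulrA.
Qed.

Lemma yfam_ac a i j : yfam a i * yfam a j = - (yfam a j * yfam a i).
Proof. by rewrite !yfam_mul Hac mulrN. Qed.
Lemma yfam_sq a i : yfam a i * yfam a i = 0.
Proof. by rewrite yfam_mul gg0 mulr0. Qed.

Definition yk n := (if (n < k)%N then 1 else -1 : F) *: g n.
Lemma yk_ac i j : yk i * yk j = - (yk j * yk i).
Proof. by rewrite /yk !sc_mul Hac scalerN mulrC. Qed.
Lemma yk_sq i : yk i * yk i = 0.
Proof. by rewrite /yk sc_mul gg0 scaler0. Qed.

Lemma yfam_low a n : (n < k + t)%N -> yfam a n = g n.
Proof. by move=> nk; rewrite /yfam mulrDl mul1r -scalerAl wg0 // scaler0 addr0. Qed.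

Lemma onepw a b : (1 + a *: w) * (1 + b *: w) = 1 + (a + b) *: w.
Proof.
by rewrite mulrDl mul1r mulrDr mulr1 sc_mul ww scaler0 addr0 scalerDl -addrA [b *: w + _]addrC.
Qed.

Lemma f1aw f a : alg_ok f -> f (1 + a *: w) = 1 + a *: f w.
Proof. by move=> Hf; rewrite fD // fZ // f1. Qed.

Lemma psi_w f a : alg_ok f -> (forall n, f (g n) = yfam a n) -> f w = w.
Proof.
move=> Hf Hg; rewrite /wk fprodo //; apply: eq_bigr => j _.
by rewrite Hg yfam_low.
Qed.

Lemma phik_w f : alg_ok f -> (forall n, f (g n) = yk n) -> f w = (-1) *: w.
Proof.
move=> Hf Hg; rewrite /wk fprodo //.
under eq_bigr => j _ do rewrite Hg /yk.
rewrite scaler_prod; congr (_ *: _).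
rewrite big_split_ord /= big1 ?mul1r; last by move=> i _; rewrite ltn_ord.
under eq_bigr => i _ do rewrite ltnNge leq_addr /=.
by rewrite prodr_const card_ord -signr_odd todd expr1.
Qed.

Lemma phik_gm f : alg_ok f -> (forall n, f (g n) = yk n) -> forall s,
  f (gm s) = ((-1) ^+ (count (fun i => (k <= i)%N) s) : F) *: gm s.
Proof.
move=> Hf Hg s; rewrite /gmono fprod //.
under eq_bigr => j _ do rewrite Hg /yk.
rewrite scaler_prod; congr (_ *: _).
elim: s => [|i s IH]; first by rewrite big_nil expr0.
rewrite big_cons IH /=; case: ltnP => _ /=; first by rewrite add0n mul1r.
by rewrite add1n exprS.
Qed.

Lemma low1 a n : (n < k + t)%N -> (1 + a *: w) * g n = g n.
Proof. exact: yfam_low. Qed.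

Lemma expand a n : (1 + a *: w) * g n = g n + a *: (w * g n).
Proof. by rewrite mulrDl mul1r -scalerAl. Qed.

Lemma wexp a n : w * (g n + a *: (w * g n)) = w * g n.
Proof. by rewrite mulrDr -scalerAr mulrA ww mul0r scaler0 addr0. Qed.

Lemma ek_of f : alg_ok f -> (forall n, f (g n) = yk n) ->
  forall b z, f z = (if b then -1 else 1 : F) *: z -> Ek_homog g k b z.
Proof.
move=> Hf Hg b z Hz.
have /andP [sr /eqP Ez] := xchooseP (span_ev z).
set r := xchoose _ in sr Ez.
set P := fun s => odd (count (fun i => (k <= i)%N) s) == b.
set e : F := if b then -1 else 1.
have E1 : z + e *: f z = 2%:R *: z.
  rewrite Hz scalerA /e; case: (b) => /=; rewrite ?mulrNN mulr1 scale1r scaler_nat mulr2n //.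
have E2 : z + e *: f z = \sum_(p <- r) (if P p.2 then 2%:R * p.1 else 0) *: gm p.2.
  rewrite {1 2}Ez f_ev // /ev scaler_sumr -big_split /=; apply: eq_bigr => p _.
  rewrite (phik_gm Hf Hg) !scalerA -scalerDl; congr (_ *: _).
  rewrite /P /e -signr_odd; case: (odd _); case: (b) => /=; rewrite ?expr1 ?expr0; ring.
have E3 : z = ev gm (filter (fun p => P p.2) r).
  apply: (scalerI H2); rewrite -E1 E2 /ev big_filter scaler_sumr [RHS]big_mkcond.
  apply: eq_bigr => p _; case: ifP => _; first by rewrite scalerA.
  by rewrite scale0r.
exists (map snd (filter (fun p => P p.2) r)), (map fst (filter (fun p => P p.2) r)).
split; [|split]; last by rewrite ev_idx.
- apply/allP => s /mapP [p]; rewrite mem_filter => /andP [Pp pr] ->.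
  exact: (allP sr) _ (map_f _ pr).
- by apply/allP => s /mapP [p]; rewrite mem_filter => /andP [Pp pr] ->.
Qed.

Lemma main_sec (phi : A -> A) : alg_ok phi ->
  (forall n, (n < k)%N -> phi (g n) = g n) ->
  (forall n, (k <= n < k + t)%N -> phi (g n) = - g n) ->
  (forall n, (k + t <= n)%N -> phi (g n) = - g n + 2%:R * (w * g n)) ->
  exists psi : A -> A, graded_iso (Ephi_homog phi) (Ek_homog g k) psi.
Proof.
move=> Hphi Hl Hm Hh.
have [fk [Hfk Hfkg]] := univ yk_ac yk_sq.
have [p1 [Hp1 Hp1g]] := univ (yfam_ac 1) (yfam_sq 1).
have [p2 [Hp2 Hp2g]] := univ (yfam_ac (-1)) (yfam_sq (-1)).
have C12 : forall x, p1 (p2 x) = x.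
  apply: (alg_eq (alg_comp Hp1 Hp2) alg_id) => n /=.
  rewrite Hp2g /yfam fM // f1aw // (psi_w Hp1 Hp1g) Hp1g /yfam mulrA onepw.
  by rewrite addNr scale0r addr0 mul1r.
have C21 : forall x, p2 (p1 x) = x.
  apply: (alg_eq (alg_comp Hp2 Hp1) alg_id) => n /=.
  rewrite Hp1g /yfam fM // f1aw // (psi_w Hp2 Hp2g) Hp2g /yfam mulrA onepw.
  by rewrite addrN scale0r addr0 mul1r.
have Comm : forall x, fk (p1 x) = p1 (phi x).
  apply: (alg_eq (alg_comp Hfk Hp1) (alg_comp Hp1 Hphi)) => n /=.
  rewrite Hp1g /yfam fM // f1aw // (phik_w Hfk Hfkg) Hfkg /yk scalerA.
  case: (ltnP n k) => nk.
    by rewrite Hl // Hp1g /yfam scale1r !low1 // ltn_addr.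
  case: (ltnP n (k + t)) => nkt.
    by rewrite Hm ?nk // fN // Hp1g /yfam -scalerAr !low1 // scaleN1r.
  rewrite Hh // mulr_natl mulr2n fD // fN // fD // fM // (psi_w Hp1 Hp1g) Hp1g /yfam.
  rewrite -scalerAr !expand wexp mul1r !scaleN1r scale1r opprD opprK.
  by rewrite opprD addrA subrK.
exists p1; split.
- exact: Hp1.
- by exists p2 => x; [apply: C21 | apply: C12].
- move=> b x Hx; apply: (ek_of Hfk Hfkg).
  rewrite Comm; move: Hx; rewrite /Ephi_homog => ->.
  by case: (b) => /=; [rewrite fN // scaleN1r | rewrite scale1r].
Qed.

End G.

Unset Implicit Arguments. Set Strict Implicit. Set Printing Implicit Defensive.

Theorem mainTheorem9 (F : fieldType) (A : algType F) (g : nat -> A)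
    (k t : nat) (phi : A -> A) :
  [pchar F] =i pred0 ->
  is_grassmann g ->
  (0 < t)%N -> odd t ->
  alg_endo phi ->
  (forall n, (n < k)%N -> phi (g n) = g n) ->
  (forall n, (k <= n < k + t)%N -> phi (g n) = - g n) ->
  (forall n, (k + t <= n)%N ->
     phi (g n) = - g n + 2%:R * ((\prod_(j < k + t) g j) * g n)) ->
  exists psi : A -> A, graded_iso (Ephi_homog phi) (Ek_homog g k) psi.
Proof.
move=> Hch [Hac Hspan Hind] t0 todd Hphi Hl Hm Hh.
have H2 : (2%:R : F) != 0.
  by have := Hch 2; rewrite !inE /= => ->.
by apply: (main_sec Hac Hspan Hind H2 t0 todd Hphi).
Qed.
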